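(* Let $\varphi\colon\Gamma\to K$ be a surjective homomorphism of discrete groups with kernel $H$. Then the following are equivalent: (1) for every normed $\mathbb{R}[\Gamma]$-module $V$, the inflation map $H^\bullet_b(\varphi;\mathrm{I}_V)\colon H^\bullet_b(K;V^H)\to H^\bullet_b(\Gamma;V)$ is an isometric isomorphism in all degrees; (2) for every Banach $\Gamma$-module $V$, the inflation map $H^1_b(\varphi;\mathrm{I}_V)\colon H^1_b(K;V^H)\to H^1_b(\Gamma;V)$ is an isomorphism; (3) $H$ is finite.
   Context: A normed $\mathbb{R}[\Gamma]$-module is a normed real vector space with an action of $\Gamma$ by $\mathbb{R}$-linear isometries; a Banach $\Gamma$-module is a complete one. The bounded cohomology $H^\bullet_b(\Gamma;V)$ is the cohomology of the complex $C^\bullet_b(\Gamma;V)^\Gamma$ of $\Gamma$-invariant bounded functions $\Gamma^{\bullet+1}\to V$ (with $\Gamma$ acting by $(g\cdot f)(g_0,\dots,g_\bullet)=g f(g^{-1}g_0,\dots,g^{-1}g_\bullet)$ and the usual homogeneous coboundary), endowed with the seminorm induced by the $\ell^\infty$-norm; ''isometric'' means preserving this seminorm. For $H=\ker\varphi$, the $H$-fixed subspace $V^H$ is a normed $\mathbb{R}[K]$-module, and the inflation map $H^\bullet_b(\varphi;\mathrm{I}_V)$ is induced by restriction along $\varphi$ together with the inclusion $\mathrm{I}_V\colon V^H\to V$. *)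

(* Defs.v *)
From HB Require Import structures.
From mathcomp Require Import all_boot all_order all_algebra.
From mathcomp Require Import all_classical all_reals all_analysis.
From mathcomp Require Import Rstruct Rstruct_topology.
Unset Printing Implicit Defensive.
Import Order.TTheory GRing.Theory Num.Theory.
Local Open Scope ring_scope.
Local Open Scope classical_set_scope.

Notation RR := Rdefinitions.R.

(* A normed R[G]-module structure on the normed real vector space V:
   an action of G on V by R-linear isometries. *)
Definition normed_action (G : groupType) (V : normedModType RR)
    (a : G -> V -> V) : Prop :=
  [/\ forall v, a 1%g v = v,
      forall g h v, a (g * h)%g v = a g (a h v),
      forall g (r : RR) u v, a g (r *: u + v) = r *: a g u + a g v
    & forall g v, `|a g v| = `|v| ].

Arguments normed_action {G V}.

Section BoundedCohomology.
(* Bounded cochains of the group G with values in the normed space V,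
   on which G acts by [a]; the values are required to lie in the
   (sub)module [S] (S = setT for V itself, S = V^H for fixed points). *)
Variables (G : groupType) (V : normedModType RR) (a : G -> V -> V) (S : set V).
Implicit Types n : nat.

(* homogeneous n-cochains: functions G^{n+1} -> V *)
Definition cochain (n : nat) := ('I_n.+1 -> G) -> V.

Definition face n (i : 'I_n.+2) (x : 'I_n.+2 -> G) : 'I_n.+1 -> G :=
  fun j => x (lift i j).

Definition coboundary n (f : cochain n) : cochain n.+1 :=
  fun x => \sum_(i < n.+2) ((-1) ^+ i : RR) *: f (face n i x).

Definition bounded_cochain n (f : cochain n) : Prop :=
  exists M : RR, forall x, `|f x| <= M.

Definition invariant_cochain n (f : cochain n) : Prop :=
  forall g x, a g (f (fun i => (g^-1 * x i)%g)) = f x.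

Definition Cb n : set (cochain n) :=
  [set f | [/\ bounded_cochain n f, invariant_cochain n f & forall x, S (f x)]].

Definition Zb n : set (cochain n) :=
  [set f | Cb n f /\ forall x, coboundary n f x = 0].

Definition Bb (n : nat) : set (cochain n) :=
  match n return set (cochain n) with
  | 0 => [set f | forall x, f x = 0]
  | m.+1 => [set f | exists b, Cb m b /\ forall x, f x = coboundary m b x]
  end.

Definition supnorm n (f : cochain n) : RR := sup (range (fun x => `|f x|)).

Definition hb_seminorm n (f : cochain n) : RR :=
  inf [set supnorm n f' | f' in [set f' | Zb n f' /\ Bb n (fun x => f' x - f x)]].

End BoundedCohomology.

Arguments face {G n}.
Arguments coboundary {G V n}.
Arguments bounded_cochain {G V n}.
Arguments invariant_cochain {G V} a {n}.
Arguments Cb {G V} a S n.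
Arguments Zb {G V} a S n.
Arguments Bb {G V} a S n.
Arguments supnorm {G V n}.
Arguments hb_seminorm {G V} a S {n}.

Section Inflation.
Variables (Gam K : groupType) (phi : Gam -> K).
Variables (V : normedModType RR) (a : Gam -> V -> V).

Definition kerH : set Gam := [set h | phi h = 1%g].
Definition fixedH : set V := [set v | forall h, kerH h -> a h v = v].

(* the induced action of K on V^H: k . v := g . v for any g with phi g = k *)
Definition actK (k : K) (v : V) : V := a (xget 1%g [set g | phi g = k]) v.

(* inflation on cochains: restriction along phi composed with I_V : V^H -> V *)
Definition inflation (n : nat) (f : cochain K V n) : cochain Gam V n :=
  fun x => f (fun i => phi (x i)).

(* The map H^n_b(phi; I_V) : H^n_b(K; V^H) -> H^n_b(Gam; V) induced by
   [inflation] on classes is bijective. *)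
Definition inflation_iso (n : nat) : Prop :=
  (forall f, Zb actK fixedH n f ->
     Bb a setT n (inflation n f) -> Bb actK fixedH n f) /\
  (forall c, Zb a setT n c ->
     exists2 f, Zb actK fixedH n f &
                Bb a setT n (fun x => c x - inflation n f x)).

Definition inflation_isometric (n : nat) : Prop :=
  forall f, Zb actK fixedH n f ->
    hb_seminorm a setT (inflation n f) = hb_seminorm actK fixedH f.

End Inflation.

Arguments kerH {Gam K}.
Arguments fixedH {Gam K} phi {V}.
Arguments actK {Gam K} phi {V}.
Arguments inflation {Gam K} phi {V n}.
Arguments inflation_iso {Gam K} phi {V} a n.
Arguments inflation_isometric {Gam K} phi {V} a n.

(* Main.v *)
Require Import Defs.
From HB Require Import structures.
From mathcomp Require Import all_boot all_order all_algebra.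
From mathcomp Require Import all_classical all_reals all_analysis.
From mathcomp Require Import Rstruct Rstruct_topology.
From mathcomp Require Import zify lra.
Import Order.TTheory GRing.Theory Num.Theory.
Local Open Scope ring_scope.
Local Open Scope classical_set_scope.

Section Mean.
Variables (G : groupType) (V : normedModType RR) (hs : seq G) (m : nat).
Hypothesis Hsz : size hs = m.+1.

Definition hsn (i : 'I_m.+1) : G := nth 1%g hs i.

Definition Mean k (F : ('I_k -> G) -> V) : V :=
  ((m.+1%:R ^+ k)^-1 : RR) *: \sum_(t : {ffun 'I_k -> 'I_m.+1}) F (fun i => hsn (t i)).

Lemma mpos k : (m.+1%:R ^+ k : RR) != 0.
Proof. by rewrite expf_neq0 // pnatr_eq0. Qed.

Lemma Mean_const k (v : V) : Mean k (fun _ => v) = v.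
Proof.
rewrite /Mean sumr_const card_ffun !card_ord -scaler_nat scalerA natrX.
by rewrite mulVf ?mpos // scale1r.
Qed.

Lemma Mean_ext k (F F' : ('I_k -> G) -> V) :
  (forall t : {ffun 'I_k -> 'I_m.+1}, F (fun i => hsn (t i)) = F' (fun i => hsn (t i))) ->
  Mean k F = Mean k F'.
Proof. by move=> e; rewrite /Mean; congr (_ *: _); apply: eq_bigr => t _; rewrite e. Qed.

Lemma Mean_scale k r (F : ('I_k -> G) -> V) : Mean k (fun h => r *: F h) = r *: Mean k F.
Proof. by rewrite /Mean -scaler_sumr !scalerA mulrC. Qed.

Lemma Mean_add k (F F' : ('I_k -> G) -> V) : Mean k (fun h => F h + F' h) = Mean k F + Mean k F'.
Proof. by rewrite /Mean big_split scalerDr. Qed.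

Lemma Mean_sub k (F F' : ('I_k -> G) -> V) : Mean k (fun h => F h - F' h) = Mean k F - Mean k F'.
Proof. by rewrite /Mean sumrB scalerBr. Qed.

Lemma Mean_sum k N (F : 'I_N -> ('I_k -> G) -> V) :
  Mean k (fun h => \sum_(i < N) F i h) = \sum_(i < N) Mean k (F i).
Proof. by rewrite /Mean exchange_big scaler_sumr. Qed.

Lemma Mean_norm k (F : ('I_k -> G) -> V) B :
  (forall t : {ffun 'I_k -> 'I_m.+1}, `|F (fun i => hsn (t i))| <= B) -> `|Mean k F| <= B.
Proof.
move=> hB; rewrite /Mean normrZ.
have -> : `|((m.+1%:R ^+ k)^-1 : RR)| = (m.+1%:R ^+ k)^-1.
  by rewrite ger0_norm // invr_ge0 exprn_ge0.
rewrite ler_pdivrMl ?exprn_gt0 ?ltr0Sn //.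
apply: (le_trans (ler_norm_sum _ _ _)).
apply: (le_trans (ler_sum _ (fun t _ => hB t))).
by rewrite sumr_const card_ffun !card_ord -natrX mulr_natl.
Qed.

Lemma Mean_face n (i : 'I_n.+2) (F : ('I_n.+1 -> G) -> V) :
  Mean n.+2 (fun h => F (face i h)) = Mean n.+1 F.
Proof.
rewrite /Mean.
pose beta (p : 'I_m.+1 * {ffun 'I_n.+1 -> 'I_m.+1}) : {ffun 'I_n.+2 -> 'I_m.+1} :=
  [ffun j => if unlift i j is Some j' then p.2 j' else p.1].
pose gam (t : {ffun 'I_n.+2 -> 'I_m.+1}) : 'I_m.+1 * {ffun 'I_n.+1 -> 'I_m.+1} :=
  (t i, [ffun j => t (lift i j)]).
have bij : bijective beta.
  exists gam.
    move=> [b s]; rewrite /gam /beta /= ffunE unlift_none; congr (_, _).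
    by apply/ffunP => j; rewrite !ffunE liftK.
  move=> t; apply/ffunP => j; rewrite /beta /gam ffunE /=.
  by case: unliftP => [j' ->|->]; rewrite ?ffunE.
rewrite (reindex beta); last by apply: onW_bij.
rewrite /= -(pair_big xpredT xpredT (fun b s => F (face i (fun j => hsn (beta (b, s) j))))) /=.
have e : forall b s, F (face i (fun j => hsn (beta (b, s) j))) = F (fun j => hsn (s j)).
  move=> b s; congr F; apply: boolp.funext => j; rewrite /face /beta ffunE liftK //.
under eq_bigr do under eq_bigr do rewrite e.
rewrite sumr_const card_ord -scaler_nat scalerA; congr (_ *: _).
rewrite exprS invfM mulrAC mulVf ?mul1r // pnatr_eq0 //.
Qed.

Hypothesis Huniq : uniq hs.

Lemma Mean_transl k (F : ('I_k -> G) -> V) (h' : 'I_k -> G) :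
  (forall i, forall x, x \in hs -> (h' i * x)%g \in hs) ->
  Mean k (fun h => F (fun i => h' i * h i)%g) = Mean k F.
Proof.
move=> hcl.
pose pi (i : 'I_k) (b : 'I_m.+1) : 'I_m.+1 := inord (index (h' i * hsn b)%g hs).
have hin : forall i b, (h' i * hsn b)%g \in hs.
  by move=> i b; apply: hcl; apply: mem_nth; rewrite Hsz.
have piE : forall i b, hsn (pi i b) = (h' i * hsn b)%g.
  move=> i b; rewrite /hsn /pi inordK; first by rewrite nth_index.
  by rewrite -Hsz index_mem.
pose Phi (t : {ffun 'I_k -> 'I_m.+1}) : {ffun 'I_k -> 'I_m.+1} := [ffun i => pi i (t i)].
have Phiinj : injective Phi.
  move=> t1 t2 e; apply/ffunP => i.
  have := congr1 (fun t : {ffun _ -> _} => hsn (t i)) e; rewrite /Phi /= !ffunE !piE.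
  move/(mulgI (h' i)); rewrite /hsn => /eqP; rewrite nth_uniq ?Hsz // => /eqP.
  exact: val_inj.
rewrite /Mean; congr (_ *: _).
rewrite [RHS](reindex_inj Phiinj); apply: eq_bigr => t _; congr F.
by apply: boolp.funext => i; rewrite /Phi ffunE piE.
Qed.

End Mean.
Arguments hsn {G} hs m i.
Arguments Mean {G V} hs m k F.
Arguments Mean_const {G V} hs m k v.
Arguments Mean_ext {G V} hs m k F F'.
Arguments Mean_scale {G V} hs m k r F.
Arguments Mean_add {G V} hs m k F F'.
Arguments Mean_sub {G V} hs m k F F'.
Arguments Mean_sum {G V} hs m k N F.
Arguments Mean_norm {G V} hs m k F B.
Arguments Mean_face {G V} hs m n i F.
Arguments Mean_transl {G V} hs m Hsz Huniq k F h'.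


Set Implicit Arguments.
Unset Strict Implicit.

Section Prism.
Variables (G : groupType) (V : normedModType RR).

Definition extf n (z : 'I_n.+1 -> G) (k : nat) : G := z (inord k).

Definition W m (j : nat) (z h : 'I_m.+1 -> G) : 'I_m.+2 -> G :=
  fun k => if (k <= j)%N then (extf z k * extf h k)%g else extf z k.-1.

Definition Qf n (j : nat) (x h : 'I_n.+1 -> G) : 'I_n.+1 -> G :=
  fun k => if (k < j)%N then (x k * h k)%g else x k.

Lemma extfE n (z : 'I_n.+1 -> G) (o : 'I_n.+1) : z o = extf z o.
Proof. by rewrite /extf inord_val. Qed.

Lemma extf_face n (i : 'I_n.+2) (x : 'I_n.+2 -> G) k : (k <= n)%N ->
  extf (face i x) k = extf x (bump i k).
Proof.
move=> kn; rewrite /extf /face; congr x; apply: val_inj => /=.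
rewrite inordK ?inordK //; rewrite /bump; lia.
Qed.

Lemma Qf0 n (x h : 'I_n.+1 -> G) : Qf 0 x h = x.
Proof. by apply: boolp.funext => k. Qed.

Lemma QfN n (x h : 'I_n.+1 -> G) : Qf n.+1 x h = (fun k => x k * h k)%g.
Proof. by apply: boolp.funext => k; rewrite /Qf ltn_ord. Qed.

Variable m : nat.
Implicit Types (x h : 'I_m.+2 -> G).

Lemma E1 x h j : (j <= m.+1)%N ->
  face (inord j) (W j x h) = Qf j x h.
Proof.
move=> jm; apply: boolp.funext => k; rewrite /face /W /Qf /= inordK; last by lia.
rewrite [x k]extfE [h k]extfE /bump.
case: (leqP j k) => jk; rewrite ?add1n ?add0n.
  by rewrite ifN; [|lia].
by rewrite ifT; [|lia].
Qed.

Lemma E1' x h j : (j <= m.+1)%N ->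
  face (inord j.+1) (W j x h) = Qf j.+1 x h.
Proof.
move=> jm; apply: boolp.funext => k; rewrite /face /W /Qf /= inordK; last by lia.
rewrite [x k]extfE [h k]extfE /bump.
case: (leqP j.+1 k) => jk; rewrite ?add1n ?add0n.
  by rewrite ifN; [|lia].
by rewrite ifT; [|lia].
Qed.

Ltac idx_solve :=
  repeat (case: ifP => ?); rewrite ?add1n ?add0n;
  first [ reflexivity | (congr (_ * _)%g; congr extf; lia) | congr extf; lia | lia ].

Lemma E2 x h i j : (i < j)%N -> (j <= m.+1)%N ->
  face (inord i) (W j x h) = W j.-1 (face (inord i) x) (face (inord i) h).
Proof.
move=> ij jm; apply: boolp.funext => k; rewrite [LHS]/face /W /=.
have kk := ltn_ord k.
case: (leqP k j.-1) => kj.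
  rewrite !extf_face; try lia.
  have i1 : (i < m.+2)%N by lia. have i2 : (i < m.+3)%N by lia.
  rewrite !inordK //. rewrite /bump; idx_solve.
rewrite extf_face; [|lia].
have i1 : (i < m.+2)%N by lia. have i2 : (i < m.+3)%N by lia.
rewrite !inordK //. rewrite /bump; idx_solve.
Qed.

Lemma E3 x h i j : (j.+1 < i)%N -> (i <= m.+2)%N ->
  face (inord i) (W j x h) = W j (face (inord i.-1) x) (face (inord i.-1) h).
Proof.
move=> ij im; apply: boolp.funext => k; rewrite [LHS]/face /W /=.
have kk := ltn_ord k.
have i1 : (i.-1 < m.+2)%N by lia. have i2 : (i < m.+3)%N by lia.
case: (leqP k j) => kj.
  rewrite !extf_face; try lia.
  rewrite !inordK //. rewrite /bump; idx_solve.
rewrite extf_face; [|lia].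
rewrite !inordK //. rewrite /bump; idx_solve.
Qed.

End Prism.


Set Implicit Arguments.
Unset Strict Implicit.

Lemma sum_eq_if (V : zmodType) n j (X : V) : (j < n)%N ->
  \sum_(0 <= i < n) (if i == j then X else 0) = X.
Proof.
elim: n => [//|n IH] jn.
rewrite big_nat_recr //=.
case: (ltnP j n) => jn'.
  by rewrite IH // ifN ?addr0 //; apply/eqP; lia.
have -> : j = n by lia.
rewrite eqxx big1_seq ?add0r // => i; rewrite mem_index_iota => /andP[_ ilt].
by rewrite ifN //; apply/eqP; lia.
Qed.

Lemma signS n : ((-1) ^+ n.+1 : RR) = - (-1) ^+ n.
Proof. by rewrite exprS mulN1r. Qed.

Section PrismSum.
Variables (G : groupType) (V : normedModType RR) (m : nat).
Variable c : cochain G V m.+1.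
Hypothesis hc : forall y, coboundary c y = 0.

Lemma prism (x h : 'I_m.+2 -> G) :
  \sum_(i < m.+2) ((-1) ^+ i : RR) *:
     (\sum_(j < m.+1) ((-1) ^+ j : RR) *: c (W j (face i x) (face i h)))
  = c x - c (fun k => x k * h k)%g.
Proof.
pose T2 (i j : nat) := ((-1) ^+ (i + j) : RR) *:
   c (W j (face (inord i : 'I_m.+2) x) (face (inord i) h)).
pose Q j := c (Qf j x h).
have L : \sum_(i < m.+2) ((-1) ^+ i : RR) *:
     (\sum_(j < m.+1) ((-1) ^+ j : RR) *: c (W j (face i x) (face i h)))
     = \sum_(0 <= i < m.+2) \sum_(0 <= j < m.+1) T2 i j.
  rewrite big_mkord; apply: eq_bigr => i _; rewrite scaler_sumr big_mkord.
  by apply: eq_bigr => j _; rewrite scalerA -exprD /T2 inord_val.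
rewrite L; clear L.
have Zs : \sum_(0 <= j < m.+2) \sum_(0 <= i < m.+3)
     ((-1) ^+ (i + j) : RR) *: c (face (inord i) (W j x h)) = 0.
  apply: big1 => j _.
  transitivity (((-1) ^+ j : RR) *: coboundary c (W j x h)); last by rewrite hc scaler0.
  rewrite /coboundary scaler_sumr big_mkord.
  by apply: eq_bigr => i _; rewrite scalerA -exprD inord_val addnC.
have dec : forall j i, (j < m.+2)%N -> (i < m.+3)%N ->
   ((-1) ^+ (i + j) : RR) *: c (face (inord i) (W j x h)) =
   (if (i < j)%N then - T2 i j.-1 else 0) + (if i == j then Q j else 0) +
   (if i == j.+1 then - Q j.+1 else 0) + (if (j.+1 < i)%N then - T2 i.-1 j else 0).
  move=> j i jm im.
  have b1 : (i < j)%N = (i < j)%N by [].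
  case: (ltnP i j) => ij.
    have e1 : (i == j) = false by apply/eqP; lia.
    have e2 : (i == j.+1) = false by apply/eqP; lia.
    have e3 : (j.+1 < i)%N = false by apply/negbTE; lia.
    rewrite ?e1 ?e2 ?e3 !addr0 E2; try lia.
    rewrite /T2 -scaleNr; congr (_ *: _).
    have -> : (i + j = (i + j.-1).+1)%N by lia.
    by rewrite signS.
  have e0 : (i < j)%N = false by apply/negbTE; lia.
  rewrite ?e0 add0r.
  case: (ltnP j.+1 i) => ji.
    have e1 : (i == j) = false by apply/eqP; lia.
    have e2 : (i == j.+1) = false by apply/eqP; lia.
    rewrite ?e1 ?e2 !add0r E3; try lia.
    rewrite /T2 -scaleNr; congr (_ *: _).
    have -> : (i + j = (i.-1 + j).+1)%N by lia.
    by rewrite signS.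
  have e3 : (j.+1 < i)%N = false by apply/negbTE; lia.
  rewrite ?e3 addr0.
  case: (eqVneq i j) => eij.
    rewrite eij ifN; last by apply/eqP; lia.
    rewrite addr0 E1; try lia.
    by rewrite addnn -mul2n exprM sqrrN !expr1n scale1r.
  have -> : i = j.+1 by lia.
  rewrite eqxx add0r E1'; try lia.
  have -> : (j.+1 + j = (j + j).+1)%N by lia.
  by rewrite signS addnn -mul2n exprM sqrrN !expr1n scaleN1r.
have Zs2 : \sum_(0 <= j < m.+2) \sum_(0 <= i < m.+3)
   ((if (i < j)%N then - T2 i j.-1 else 0) + (if i == j then Q j else 0) +
   (if i == j.+1 then - Q j.+1 else 0) + (if (j.+1 < i)%N then - T2 i.-1 j else 0)) = 0.
  rewrite -[RHS]Zs; apply: eq_big_nat => j jm; apply: eq_big_nat => i im.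
  by rewrite dec //; lia.
set S1 := \sum_(0 <= j < m.+2) \sum_(0 <= i < m.+3) (if (i < j)%N then T2 i j.-1 else 0).
set S2 := \sum_(0 <= j < m.+2) \sum_(0 <= i < m.+3) (if (j.+1 < i)%N then T2 i.-1 j else 0).
have nA : forall (P : nat -> bool) (F : nat -> V) n,
   \sum_(0 <= i < n) (if P i then - F i else 0) = - \sum_(0 <= i < n) (if P i then F i else 0).
  move=> P F n; rewrite -sumrN; apply: eq_bigr => i _; case: ifP; rewrite ?oppr0 //.
have Zs3 : - S1 + \sum_(0 <= j < m.+2) (Q j - Q j.+1) - S2 = 0.
  rewrite -[RHS]Zs2 /S1 /S2 -!sumrN -!big_split /=.
  apply: eq_big_nat => j jm.
  rewrite !big_split /= sum_eq_if; last by lia.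
  rewrite (sum_eq_if (j := j.+1)); last by lia.
  rewrite !(nA (fun i => (i < j)%N)) !(nA (fun i => (j.+1 < i)%N)).
  by rewrite !addrA.
have tel : \sum_(0 <= j < m.+2) (Q j - Q j.+1) = c x - c (fun k => x k * h k)%g.
  rewrite -[LHS]opprK -sumrN.
  under eq_bigr do rewrite opprB.
  rewrite telescope_sumr // opprB /Q Qf0.
  by rewrite (QfN x h).
have P1 : S1 = \sum_(0 <= i < m.+2) \sum_(0 <= j < m.+1) (if (i <= j)%N then T2 i j else 0).
  rewrite /S1 big_nat_recl // [X in X + _]big1 ?add0r; last by [].
  rewrite exchange_big big_nat_recr //= [X in _ + X]big1_seq ?addr0; last first.
    by move=> j; rewrite mem_index_iota => /andP[_ jl]; rewrite ifN //; lia.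
  by apply: eq_big_nat => i _; apply: eq_big_nat => j _.
have P2 : S2 = \sum_(0 <= i < m.+2) \sum_(0 <= j < m.+1) (if (j < i)%N then T2 i j else 0).
  rewrite /S2 big_nat_recr //= [X in _ + X]big1_seq ?addr0; last first.
    by move=> i; rewrite mem_index_iota => /andP[_ il]; rewrite ifN //; lia.
  under eq_bigr do rewrite big_nat_recl //= add0r.
  rewrite exchange_big.
  by apply: eq_big_nat => i _; apply: eq_big_nat => j _.
transitivity (S1 + S2).
  rewrite P1 P2 -big_split; apply: eq_big_nat => i _; rewrite -big_split.
  apply: eq_big_nat => j _ /=; case: (leqP i j) => ij; rewrite ?addr0 ?add0r //.
rewrite -tel; move: Zs3; move: (\sum_(0 <= j < m.+2) (Q j - Q j.+1)) => X e.
apply/eqP; rewrite eq_sym -subr_eq0 -e.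
by rewrite opprD addrA [- S1 + X]addrC.
Qed.

End PrismSum.


Set Implicit Arguments.
Unset Strict Implicit.

Section ActLin.
Variables (G : groupType) (V : normedModType RR) (a : G -> V -> V).
Hypothesis ha : normed_action a.

Lemma act1 v : a 1%g v = v. Proof. by case: ha. Qed.
Lemma actM g h v : a (g * h)%g v = a g (a h v). Proof. by case: ha. Qed.
Lemma act_norm g v : `|a g v| = `|v|. Proof. by case: ha. Qed.
Lemma act_lin g r u v : a g (r *: u + v) = r *: a g u + a g v. Proof. by case: ha. Qed.

Lemma act0 g : a g 0 = 0.
Proof. by have := act_lin g (-1) 0 0; rewrite scaler0 addr0 scaleN1r addNr. Qed.

Lemma actD g u v : a g (u + v) = a g u + a g v.
Proof. by have := act_lin g 1 u v; rewrite !scale1r. Qed.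

Lemma actZ g r u : a g (r *: u) = r *: a g u.
Proof. by have := act_lin g r u 0; rewrite !addr0 act0 addr0. Qed.

Lemma actN g u : a g (- u) = - a g u.
Proof. by rewrite -scaleN1r actZ scaleN1r. Qed.

Lemma actB g u v : a g (u - v) = a g u - a g v.
Proof. by rewrite actD actN. Qed.

Lemma act_sum g I (r : seq I) (P : pred I) (F : I -> V) :
  a g (\sum_(i <- r | P i) F i) = \sum_(i <- r | P i) a g (F i).
Proof. exact: (big_morph (a g) (actD g) (act0 g)). Qed.

Lemma act_Mean g hs p k (F : ('I_k -> G) -> V) :
  a g (Mean hs p k F) = Mean hs p k (fun h => a g (F h)).
Proof. by rewrite /Mean actZ act_sum. Qed.

Lemma actKV g v : a g (a g^-1 v) = v.
Proof. by rewrite -actM mulgV act1. Qed.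

Lemma actVK g v : a g^-1 (a g v) = v.
Proof. by rewrite -actM mulVg act1. Qed.

End ActLin.

Section GroupFacts.
Variables (Gam K : groupType) (phi : Gam -> K).
Hypothesis phi_morph : {morph phi : x y / (x * y)%g}.

Lemma phi1 : phi 1%g = 1%g.
Proof.
have := phi_morph 1%g 1%g; rewrite mulg1 => e.
by apply: (mulgI (phi 1%g)); rewrite -e mulg1.
Qed.

Lemma phiV g : phi g^-1%g = (phi g)^-1%g.
Proof.
apply: (mulIg (phi g)); rewrite -phi_morph !mulVg; exact: phi1.
Qed.

End GroupFacts.


Section SupNorm.
Variables (G : groupType) (V : normedModType RR).

Lemma supnorm_ge n (f : cochain G V n) x : bounded_cochain f -> `|f x| <= supnorm f.
Proof.
move=> [M hM]; apply: sup_upper_bound; last by exists x.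
split; first by exists `|f x|, x.
by exists M => r [y _ <-].
Qed.

Lemma supnorm_le n (f : cochain G V n) B : (forall x, `|f x| <= B) -> supnorm f <= B.
Proof.
move=> hB; apply: ge_sup; first by exists `|f (fun=> 1%g)|, (fun=> 1%g).
by move=> r [y _ <-].
Qed.

Lemma supnorm_ge0 n (f : cochain G V n) : bounded_cochain f -> 0 <= supnorm f.
Proof. by move=> hb; apply: le_trans (supnorm_ge (fun=> 1%g) hb). Qed.

Lemma Bb_zero (a : G -> V -> V) (S : set V) n (g : cochain G V n) :
  (forall h, a h 0 = 0) -> S 0 -> (forall x, g x = 0) -> Bb a S n g.
Proof.
move=> a0 S0 g0; case: n g g0 => [|m] g g0 //=.
exists (fun _ => 0); split; first split.
- by exists 0 => x; rewrite normr0.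
- by move=> h x; rewrite a0.
- by [].
by move=> x; rewrite g0 /coboundary big1 // => i _; rewrite scaler0.
Qed.

End SupNorm.

Section FiniteKernel.
Variables (Gam K : groupType) (phi : Gam -> K).
Hypothesis phi_morph : {morph phi : x y / (x * y)%g}.
Variable s : K -> Gam.
Hypothesis sK : forall k, phi (s k) = k.
Variables (hs : seq Gam) (p : nat).
Hypotheses (Hsz : size hs = p.+1) (Huniq : uniq hs).
Hypothesis hsP : forall g, g \in hs <-> phi g = 1%g.
Variables (V : normedModType RR) (a : Gam -> V -> V).
Hypothesis ha : normed_action a.

Local Notation MN := (Mean hs p).

Lemma hs_ker (t : 'I_p.+1) : phi (hsn hs p t) = 1%g.
Proof. by apply/hsP; rewrite /hsn mem_nth // Hsz. Qed.

Lemma hs_cl h : phi h = 1%g -> forall x, x \in hs -> (h * x)%g \in hs.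
Proof. by move=> hh x /hsP hx; apply/hsP; rewrite phi_morph hh hx mulg1. Qed.

Definition Pav n (f : cochain Gam V n) : cochain Gam V n :=
  fun x => MN n.+1 (fun h => f (fun i => x i * h i)%g).

Lemma Pav_coboundary n (f : cochain Gam V n) x :
  coboundary (Pav f) x = Pav (coboundary f) x.
Proof.
rewrite /coboundary /Pav.
transitivity (\sum_(i < n.+2) ((-1) ^+ i : RR) *:
    MN n.+2 (fun h => f (face i (fun k => x k * h k)%g))).
  apply: eq_bigr => i _; congr (_ *: _).
  symmetry; exact: (Mean_face hs p n i (fun h' => f (fun j => (face i x j * h' j)%g))).
by rewrite Mean_sum; apply: eq_bigr => i _; rewrite Mean_scale.
Qed.

Lemma Pav_inv n (f : cochain Gam V n) : invariant_cochain a f -> invariant_cochain a (Pav f).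
Proof.
move=> hf g x; rewrite /Pav act_Mean //; apply: Mean_ext => t.
rewrite -(hf g (fun i => x i * hsn hs p (t i))%g); congr (a g (f _)).
by apply: boolp.funext => i; rewrite mulgA.
Qed.

Lemma Pav_bounded n (f : cochain Gam V n) : bounded_cochain f -> bounded_cochain (Pav f).
Proof. by move=> [M hM]; exists M => x; apply: Mean_norm => t; apply: hM. Qed.

Lemma Pav_transl n (f : cochain Gam V n) x (h' : 'I_n.+1 -> Gam) :
  (forall i, phi (h' i) = 1%g) -> Pav f (fun i => x i * h' i)%g = Pav f x.
Proof.
move=> hh; rewrite /Pav.
transitivity (MN n.+1 (fun h => (fun h0 : 'I_n.+1 -> Gam => f (fun i => x i * h0 i)%g)
                                  (fun i => h' i * h i)%g)).
  by congr (MN n.+1 _); apply: boolp.funext => h; congr f; apply: boolp.funext => i; rewrite mulgA.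
apply: (Mean_transl hs p Hsz Huniq n.+1 _ h') => i y; exact: hs_cl.
Qed.

Lemma Pav_phi n (f : cochain Gam V n) x y :
  (forall i, phi (x i) = phi (y i)) -> Pav f x = Pav f y.
Proof.
move=> e.
have -> : y = (fun i => x i * ((x i)^-1 * y i))%g.
  by apply: boolp.funext => i; rewrite mulVKg.
symmetry; apply: (@Pav_transl _ f x (fun i => ((x i)^-1 * y i)%g)) => i; rewrite phi_morph phiV // e mulVg //.
Qed.

Lemma Pav_infl n (f : cochain K V n) x : Pav (inflation phi f) x = inflation phi f x.
Proof.
rewrite /Pav (Mean_ext hs p n.+1 _ (fun _ => inflation phi f x)) ?Mean_const // => t.
rewrite /inflation; congr f; apply: boolp.funext => i.
by rewrite phi_morph hs_ker mulg1.
Qed.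

Lemma Pav_fixed n (f : cochain Gam V n) : invariant_cochain a f ->
  forall x, fixedH phi a (Pav f x).
Proof.
move=> hf x h hh.
have := Pav_inv hf h (fun i => h * x i)%g.
have -> : (fun i => h^-1 * (h * x i))%g = x by apply: boolp.funext => i; rewrite mulKg.
move=> ->; apply: Pav_phi => i; by rewrite phi_morph hh mul1g.
Qed.

Definition Aop n (f : cochain Gam V n) : cochain K V n := fun k => Pav f (fun i => s (k i)).

Lemma infl_Aop n (f : cochain Gam V n) x : inflation phi (Aop f) x = Pav f x.
Proof. by rewrite /inflation /Aop; apply: Pav_phi => i; rewrite sK. Qed.

Lemma Aop_infl n (f : cochain K V n) k : Aop (inflation phi f) k = f k.
Proof.
rewrite /Aop Pav_infl /inflation; congr f; apply: boolp.funext => i; exact: sK.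
Qed.

Lemma Aop_coboundary n (f : cochain Gam V n) k :
  coboundary (Aop f) k = Aop (coboundary f) k.
Proof. exact: Pav_coboundary. Qed.

Lemma actK_eq (v : V) g : fixedH phi a v -> actK phi a (phi g) v = a g v.
Proof.
move=> fv; rewrite /actK.
set g0 := xget _ _.
have : phi g0 = phi g by apply: (@xgetPex _ 1%g [set g' | phi g' = phi g]); exists g.
move=> e.
have -> : g0 = (g * (g^-1 * g0))%g by rewrite mulVKg.
rewrite actM // fv //.
by rewrite /kerH /= phi_morph phiV // e mulVg.
Qed.

Lemma Aop_fixed n (f : cochain Gam V n) : invariant_cochain a f ->
  forall k, fixedH phi a (Aop f k).
Proof. by move=> hf k; apply: Pav_fixed. Qed.

Lemma Aop_inv n (f : cochain Gam V n) : invariant_cochain a f ->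
  invariant_cochain (actK phi a) (Aop f).
Proof.
move=> hf k' k.
rewrite -{1}(sK k') actK_eq; last exact: Aop_fixed.
rewrite /Aop.
set g := s k'.
have := Pav_inv hf g (fun i => g * s (k'^-1 * k i))%g.
have -> : (fun i => g^-1 * (g * s (k'^-1 * k i)))%g = (fun i => s (k'^-1 * k i))%g.
  by apply: boolp.funext => i; rewrite mulKg.
move=> ->; apply: Pav_phi => i.
by rewrite phi_morph !sK mulVKg.
Qed.

Lemma Aop_bounded n (f : cochain Gam V n) : bounded_cochain f -> bounded_cochain (Aop f).
Proof. by move=> /Pav_bounded [M hM]; exists M => k; apply: hM. Qed.

Lemma Aop_sub n (f g : cochain Gam V n) k :
  Aop (fun x => f x - g x) k = Aop f k - Aop g k.
Proof. by rewrite /Aop /Pav Mean_sub. Qed.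

Lemma Aop_ext n (f g : cochain Gam V n) : (forall x, f x = g x) -> forall k, Aop f k = Aop g k.
Proof. by move=> e k; have -> : f = g by apply: boolp.funext. Qed.

Definition Top m (c : cochain Gam V m.+1) : cochain Gam V m :=
  fun z => MN m.+1 (fun h => \sum_(j < m.+1) ((-1) ^+ j : RR) *: c (W j z h)).

Lemma Top_inv m (c : cochain Gam V m.+1) : invariant_cochain a c -> invariant_cochain a (Top c).
Proof.
move=> hc g z; rewrite /Top act_Mean //; apply: Mean_ext => t.
rewrite act_sum //; apply: eq_bigr => j _; rewrite actZ //; congr (_ *: _).
rewrite -(hc g (W j z (fun i => hsn hs p (t i)))); congr (a g (c _)).
apply: boolp.funext => k; rewrite /W /extf.
by case: ifP => _; rewrite ?mulgA.
Qed.

Lemma Top_bounded m (c : cochain Gam V m.+1) : bounded_cochain c -> bounded_cochain (Top c).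
Proof.
move=> [M hM]; exists (m.+1%:R * M) => z; apply: Mean_norm => t.
apply: (le_trans (ler_norm_sum _ _ _)).
apply: (@le_trans _ _ (\sum_(j < m.+1) M)).
  by apply: ler_sum => j _; rewrite normrZ normrX normrN normr1 expr1n mul1r.
by rewrite sumr_const card_ord mulr_natl.
Qed.

Lemma Top_prism m (c : cochain Gam V m.+1) : (forall y, coboundary c y = 0) ->
  forall x, coboundary (Top c) x = c x - Pav c x.
Proof.
move=> hc x; rewrite /coboundary /Top.
transitivity (\sum_(i < m.+2) ((-1) ^+ i : RR) *:
    MN m.+2 (fun h => \sum_(j < m.+1) ((-1) ^+ j : RR) *: c (W j (face i x) (face i h)))).
  apply: eq_bigr => i _; congr (_ *: _).
  symmetry; exact: (Mean_face hs p m i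
     (fun h' => \sum_(j < m.+1) ((-1) ^+ j : RR) *: c (W j (face i x) h'))).
transitivity (MN m.+2 (fun h => \sum_(i < m.+2) ((-1) ^+ i : RR) *:
    (\sum_(j < m.+1) ((-1) ^+ j : RR) *: c (W j (face i x) (face i h))))).
  by rewrite Mean_sum; apply: eq_bigr => i _; rewrite Mean_scale.
rewrite (Mean_ext hs p m.+2 _ (fun h => c x - c (fun k => x k * h k)%g)); last first.
  by move=> t; apply: prism.
by rewrite Mean_sub Mean_const.
Qed.

Lemma infl_inv n (f : cochain K V n) : invariant_cochain (actK phi a) f ->
  (forall k, fixedH phi a (f k)) -> invariant_cochain a (inflation phi f).
Proof.
move=> hf fx g x; rewrite /inflation -actK_eq //.
rewrite -[RHS](hf (phi g)); congr (actK phi a _ (f _)).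
by apply: boolp.funext => i; rewrite phi_morph phiV.
Qed.

Lemma infl_bounded n (f : cochain K V n) : bounded_cochain f -> bounded_cochain (inflation phi f).
Proof. by move=> [M hM]; exists M => x; apply: hM. Qed.

Lemma infl_coboundary n (f : cochain K V n) x :
  coboundary (inflation phi f) x = inflation phi (coboundary f) x.
Proof. by []. Qed.

Lemma supnorm_infl n (f : cochain K V n) : supnorm (inflation phi f) = supnorm f.
Proof.
rewrite /supnorm; congr sup; apply/seteqP; split => r /= [y _ <-].
  by exists (fun i => phi (y i)).
exists (fun i => s (y i)) => //; rewrite /inflation; congr (`| f _ |).
by apply: boolp.funext => i; rewrite sK.
Qed.


Lemma const0 (c : cochain Gam V 0) : (forall y, coboundary c y = 0) -> forall x y, c x = c y.
Proof.
move=> hc x y.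
pose y2 : 'I_2 -> Gam := fun k => if val k == 0%N then x ord0 else y ord0.
have := hc y2; rewrite /coboundary big_ord_recr big_ord1 /= expr0 expr1 scale1r scaleN1r.
have e0 : forall i : 'I_2, val i = 0%N -> face i y2 = y.
  move=> i i0; apply: boolp.funext => j; rewrite (ord1 j) /face /y2 /= /bump i0 /=.
  by congr y; apply: val_inj; rewrite /= (ord1 j).
have e1 : forall i : 'I_2, val i = 1%N -> face i y2 = x.
  move=> i i0; apply: boolp.funext => j; rewrite (ord1 j) /face /y2 /= /bump i0 /=.
  by congr x; apply: val_inj; rewrite /= (ord1 j).
rewrite e0 // e1 //.
by move/eqP; rewrite subr_eq0 => /eqP.
Qed.

Lemma Aop0 n k : Aop (fun _ : 'I_n.+1 -> Gam => 0) k = 0.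
Proof. by rewrite /Aop /Pav Mean_const. Qed.

Theorem fin_iso n : inflation_iso phi a n.
Proof.
split.
  move=> f [[fb finv ffix] fcoc] hB.
  case: n f fb finv ffix fcoc hB => [|m] f fb finv ffix fcoc hB.
    move=> k /=; rewrite -(hB (fun i => s (k i))) /inflation; congr f.
    by apply: boolp.funext => i; rewrite sK.
  case: hB => b [[bb binv _] e].
  exists (Aop b); split; first split.
  - exact: Aop_bounded.
  - exact: Aop_inv.
  - exact: Aop_fixed.
  by move=> k; rewrite -(Aop_infl f k) (Aop_ext e) -Aop_coboundary.
move=> c [[cb cinv _] ccoc].
exists (Aop c).
  split; first split.
  - exact: Aop_bounded.
  - exact: Aop_inv.
  - exact: Aop_fixed.
  by move=> k; rewrite Aop_coboundary (Aop_ext ccoc) Aop0.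
case: n c cb cinv ccoc => [|m] c cb cinv ccoc.
  move=> x; rewrite infl_Aop /Pav (Mean_ext hs p 1 _ (fun _ => c x)) ?Mean_const ?subrr //.
  by move=> t; apply: const0.
exists (Top c); split; first split.
- exact: Top_bounded.
- exact: Top_inv.
- by [].
by move=> x; rewrite infl_Aop Top_prism.
Qed.

Lemma Zb_bounded (G : groupType) (a' : G -> V -> V) S n (f : cochain G V n) :
  Zb a' S n f -> bounded_cochain f.
Proof. by case=> [[]]. Qed.

Theorem fin_isom n : inflation_isometric phi a n.
Proof.
move=> f fZ; have [[fb finv ffix] fcoc] := fZ.
have a0 : forall g, a g 0 = 0 by move=> g; apply: act0.
have aK0 : forall k, actK phi a k 0 = 0 by move=> k; rewrite /actK act0.
have fix0 : fixedH phi a 0 by move=> h _; rewrite act0.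
rewrite /hb_seminorm.
set SG := [set supnorm f' | f' in _].
set SK := [set supnorm f' | f' in _].
have lbG : has_lbound SG.
  by exists 0 => r [f' [f'Z _] <-]; apply: supnorm_ge0; apply: Zb_bounded f'Z.
have lbK : has_lbound SK.
  by exists 0 => r [f' [f'Z _] <-]; apply: supnorm_ge0; apply: Zb_bounded f'Z.
have inflZ : forall f'', Zb (actK phi a) (fixedH phi a) n f'' -> Zb a setT n (inflation phi f'').
  move=> f'' [[b1 i1 x1] c1]; split; first split.
  - exact: infl_bounded.
  - exact: infl_inv.
  - by [].
  by move=> x; rewrite infl_coboundary /inflation c1.
have AZ : forall f', Zb a setT n f' -> Zb (actK phi a) (fixedH phi a) n (Aop f').
  move=> f' [[b1 i1 _] c1]; split; first split.
  - exact: Aop_bounded.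
  - exact: Aop_inv.
  - exact: Aop_fixed.
  by move=> k; rewrite Aop_coboundary (Aop_ext c1) Aop0.
apply/le_anti/andP; split.
  apply: lb_le_inf.
    exists (supnorm f), f => //; split => //.
    by apply: Bb_zero => // x; rewrite subrr.
  move=> r [f'' [f''Z hB] <-].
  rewrite -supnorm_infl; apply: ge_inf => //.
  exists (inflation phi f'') => //; split; first exact: inflZ.
  case: n f fZ fb finv ffix fcoc SG SK lbG lbK inflZ AZ f'' f''Z hB
    => [|m] f fZ fb finv ffix fcoc SG SK lbG lbK inflZ AZ f'' f''Z hB.
    by move=> x; rewrite /inflation hB.
  case: hB => b [[bb binv bfix] e].
  exists (inflation phi b); split; first split.
  - exact: infl_bounded.
  - exact: infl_inv.
  - by [].
  by move=> x; rewrite /inflation e.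
apply: lb_le_inf.
  exists (supnorm (inflation phi f)), (inflation phi f) => //; split; first exact: inflZ.
  by apply: Bb_zero => // x; rewrite subrr.
move=> r [f' [f'Z hB] <-].
apply: (@le_trans _ _ (supnorm (Aop f'))).
  apply: ge_inf => //; exists (Aop f') => //; split; first exact: AZ.
  case: n f fZ fb finv ffix fcoc SG SK lbG lbK inflZ AZ f' f'Z hB
    => [|m] f fZ fb finv ffix fcoc SG SK lbG lbK inflZ AZ f' f'Z hB.
    move=> k /=; rewrite -(Aop_infl f k) -Aop_sub (Aop_ext hB); exact: Aop0.
  case: hB => b [[bb binv bfix] e].
  exists (Aop b); split; first split.
  - exact: Aop_bounded.
  - exact: Aop_inv.
  - exact: Aop_fixed.
  by move=> k; rewrite -(Aop_infl f k) -Aop_sub (Aop_ext e) Aop_coboundary.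
apply: supnorm_le => k; rewrite /Aop /Pav; apply: Mean_norm => t.
by apply: supnorm_ge; apply: Zb_bounded f'Z.
Qed.

End FiniteKernel.


Import numFieldNormedType.Exports.

Set Implicit Arguments.
Unset Strict Implicit.

Lemma cvg_sum_seq (R : realType) (T : Type) (U : Type) (G : set_system U) (FG : Filter G) (s : seq T)
  (f : T -> U -> R) (l : T -> R) :
  (forall x, f x @ G --> l x) ->
  (fun u => \sum_(x <- s) f x u) @ G --> \sum_(x <- s) l x.
Proof.
move=> hf; elim: s => [|x s IH].
  have -> : (fun u => \sum_(x <- [::]) f x u) = (fun=> 0) by apply: boolp.funext => u; rewrite big_nil.
  rewrite big_nil; exact: cvg_cst.
have -> : (fun u => \sum_(y <- x :: s) f y u) = (f x + (fun u => \sum_(y <- s) f y u)).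
  by apply: boolp.funext => u; rewrite big_cons.
rewrite big_cons; exact: (cvgD (hf x) IH).
Qed.

Lemma cvg_dist_pt (R : realType) (U : Type) (G : set_system U) (FG : Filter G)
  (g : U -> R) (a l : R) : g @ G --> l -> (fun u => `|a - g u|) @ G --> `|a - l|.
Proof. by move=> hg; apply: cvg_norm; apply: cvgB => //; exact: cvg_cst. Qed.

Section L10.
Variable T : choiceType.

Definition l1b (u : T -> RR) : Prop :=
  exists M : RR, forall s : seq T, uniq s -> \sum_(x <- s) `|u x| <= M.
Definition sum0 (u : T -> RR) : Prop :=
  forall e : RR, 0 < e -> exists s0 : seq T, forall t : seq T, uniq t ->
    {subset s0 <= t} -> `|\sum_(x <- t) u x| <= e.

Definition L1pred : {pred T -> RR^o} := fun u => `[< l1b u /\ sum0 u >].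

Record L10 := L10Pack { l1val :> T -> RR^o; l1P : l1val \in L1pred }.

HB.instance Definition _ := [isSub for l1val].
HB.instance Definition _ := [Choice of L10 by <:].

Lemma L1P (u : T -> RR^o) : (u \in L1pred) = `[< l1b u /\ sum0 u >].
Proof. by []. Qed.

Lemma sum0_e (u : T -> RR^o) : sum0 u -> forall e : RR, 0 < e -> exists s0 : seq T,
  forall t, uniq t -> {subset s0 <= t} -> `|\sum_(x <- t) u x| <= e.
Proof. by []. Qed.

Lemma L1_submod_closed : submod_closed L1pred.
Proof.
split.
  rewrite L1P; apply/asboolP; split.
    by exists 0 => s _; rewrite big1 // => x _; rewrite normr0.
  by move=> e e0; exists [::] => t _ _; rewrite big1 ?normr0 ?ltW.
move=> r u v; rewrite !L1P => /asboolP[[Mu hu] su] /asboolP[[Mv hv] sv].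
apply/asboolP; split.
  exists (`|r| * Mu + Mv) => s us.
  apply: (le_trans (y := \sum_(x <- s) (`|r| * `|u x| + `|v x|))).
    apply: ler_sum => x _; rewrite /= /GRing.scale /=.
    by apply: (le_trans (ler_normD _ _)); rewrite normrM.
  rewrite big_split /= -mulr_sumr; apply: lerD; last exact: hv.
  by apply: ler_wpM2l => //; apply: hu.
move=> e e0.
have e2 : 0 < e / 2 by rewrite divr_gt0.
have e3 : 0 < e / 2 / (`|r| + 1) by rewrite divr_gt0 // ltr_wpDl.
have [s1 h1] := su _ e3.
have [s2 h2] := sv _ e2.
exists (s1 ++ s2) => t ut st.
have st1 : {subset s1 <= t} by move=> x xs; apply: st; rewrite mem_cat xs.
have st2 : {subset s2 <= t} by move=> x xs; apply: st; rewrite mem_cat xs orbT.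
rewrite /= (_ : \sum_(x <- t) _ = r * \sum_(x <- t) u x + \sum_(x <- t) v x); last first.
  by rewrite big_split /= mulr_sumr.
apply: (le_trans (ler_normD _ _)).
rewrite [e]splitr; apply: lerD; last exact: h2.
rewrite normrM.
apply: (le_trans (y := `|r| * (e / 2 / (`|r| + 1)))).
  by apply: ler_wpM2l => //; apply: h1.
rewrite mulrA ler_pdivrMr ?ltr_wpDl // mulrC ler_wpM2l ?divr_ge0 ?ltW //.
by rewrite ltrDl.
Qed.

HB.instance Definition _ := GRing.isSubmodClosed.Build RR (T -> RR^o) L1pred L1_submod_closed.
HB.instance Definition _ := [SubChoice_isSubLmodule of L10 by <:].

Definition l1norm (u : L10) : RR :=
  sup [set \sum_(x <- s) `|u x| | s in [set s : seq T | uniq s]].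

Lemma L10P (u : L10) : l1b u /\ sum0 u.
Proof. by apply/asboolP; exact: l1P. Qed.

Lemma L10D (u v : L10) x : (u + v : L10) x = u x + v x. Proof. by []. Qed.
Lemma L10Z (r : RR) (u : L10) x : (r *: u : L10) x = r * u x. Proof. by []. Qed.
Lemma L10N (u : L10) x : (- u : L10) x = - u x. Proof. by []. Qed.
Lemma L10B (u v : L10) x : (u - v : L10) x = u x - v x. Proof. by []. Qed.
Lemma L100 x : (0 : L10) x = 0. Proof. by []. Qed.

Lemma L10_eq (u v : L10) : (forall x, u x = v x) -> u = v.
Proof. by move=> e; apply: val_inj; apply: boolp.funext. Qed.

Definition SU (u : T -> RR^o) := [set \sum_(x <- s) `|u x| | s in [set s : seq T | uniq s]].

Lemma SU_has_sup (u : L10) : has_sup (SU u).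
Proof.
have [[M hM] _] := L10P u.
split; first by exists (\sum_(x <- [::]) `|u x|), [::].
by exists M => r [s us <-]; apply: hM.
Qed.

Lemma l1_ge (u : L10) s : uniq s -> \sum_(x <- s) `|u x| <= l1norm u.
Proof. by move=> us; apply: sup_upper_bound (SU_has_sup u) _ _; exists s. Qed.

Lemma l1_le (u : L10) B : (forall s, uniq s -> \sum_(x <- s) `|u x| <= B) -> l1norm u <= B.
Proof.
move=> hB; apply: ge_sup; first by exists (\sum_(x <- [::]) `|u x|), [::].
by move=> r [s us <-]; apply: hB.
Qed.

Lemma l1_ge0 (u : L10) : 0 <= l1norm u.
Proof. by have := l1_ge u (s := [::]) isT; rewrite big_nil. Qed.

Lemma l1_pt (u : L10) x : `|u x| <= l1norm u.
Proof. by have := l1_ge u (s := [:: x]) isT; rewrite big_seq1. Qed.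

Lemma l1_normD (u v : L10) : l1norm (u + v) <= l1norm u + l1norm v.
Proof.
apply: l1_le => s us.
apply: (le_trans (y := \sum_(x <- s) (`|u x| + `|v x|))).
  by apply: ler_sum => x _; rewrite L10D ler_normD.
by rewrite big_split /=; apply: lerD; apply: l1_ge.
Qed.

Lemma l1_normZle (l : RR) (u : L10) : l1norm (l *: u) <= `|l| * l1norm u.
Proof.
apply: l1_le => s us.
under eq_bigr do rewrite L10Z normrM.
by rewrite -mulr_sumr ler_wpM2l //; apply: l1_ge.
Qed.

Lemma l1_normZ (l : RR) (u : L10) : l1norm (l *: u) = `|l| * l1norm u.
Proof.
apply/le_anti/andP; split; first exact: l1_normZle.
have [->|l0] := eqVneq l 0; first by rewrite normr0 mul0r l1_ge0.
have := l1_normZle l^-1 (l *: u); rewrite scalerA mulVf // scale1r.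
by rewrite normrV ?unitfE // ler_pdivlMl ?normr_gt0.
Qed.

Lemma l1_norm0 (u : L10) : l1norm u = 0 -> u = 0.
Proof.
move=> h; apply: L10_eq => x; rewrite L100; apply/normr0_eq0/eqP.
by rewrite eq_le normr_ge0 andbT -h l1_pt.
Qed.

HB.instance Definition _ := Lmodule_isNormed.Build RR L10 l1_normD l1_normZ l1_norm0.

Lemma normL10 (u : L10) : `|u| = l1norm u. Proof. by []. Qed.

Lemma l1_complete (F : set_system L10) : ProperFilter F -> cauchy F -> cvg F.
Proof.
move=> FF /(cauchyP F) Fc.
have Gc : forall x, cvg ((fun u : L10 => (u x : RR)) @ F).
  move=> x; apply: R_complete; apply/cauchyP => e e0.
  have [z Fz] := Fc e e0; exists (z x : RR).
  suff : F (fun u : L10 => ball (z x : RR) e (u x)) by [].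
  apply: filterS Fz => u; rewrite -!ball_normE /ball_ /= => hu.
  by apply: le_lt_trans hu; rewrite -L10B normL10 l1_pt.
pose L x := lim ((fun u : L10 => (u x : RR)) @ F).
have LG : forall x, (fun u : L10 => (u x : RR)) @ F --> L x by move=> x; apply: Gc.
have key : forall (z : L10) e, F (ball z e) -> forall s, uniq s ->
    \sum_(x <- s) `|(z x : RR) - L x| <= e.
  move=> z e Fz s us.
  apply: (@cvgr_to_le _ F FF _ (fun u : L10 => \sum_(x <- s) `|(z x : RR) - u x|)).
    by apply: cvg_sum_seq => x; apply: cvg_dist_pt; exact: LG.
  apply: filterS Fz => u; rewrite -ball_normE /ball_ /= => hu.
  apply: ltW; apply: le_lt_trans hu.
  rewrite normL10; under eq_bigr do rewrite -L10B; exact: l1_ge.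
have LP : (L : T -> RR^o) \in L1pred.
  rewrite L1P; apply/asboolP; split.
    have [z Fz] := Fc 1 ltr01.
    exists (l1norm z + 1) => s us.
    apply: (le_trans (y := \sum_(x <- s) (`|z x| + `|(z x : RR) - L x|))).
      apply: ler_sum => x _.
      have e : L x = (z x : RR) - ((z x : RR) - L x) by rewrite opprB addrC subrK.
      rewrite [X in `|X| <= _]e; exact: ler_normB.
    by rewrite big_split /=; apply: lerD; [apply: l1_ge | apply: key].
  move=> e e0.
  have e2 : 0 < e / 2 by rewrite divr_gt0.
  have [z Fz] := Fc _ e2.
  have [_ sz] := L10P z.
  have [s0 hs0] := sz _ e2.
  exists s0 => t ut st.
  have -> : \sum_(x <- t) L x = \sum_(x <- t) (z x : RR) - \sum_(x <- t) ((z x : RR) - L x).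
    by rewrite -sumrB; apply: eq_bigr => x _; rewrite opprB addrC subrK.
  apply: (le_trans (ler_normB _ _)); rewrite [e]splitr; apply: lerD; first exact: hs0.
  by apply: (le_trans (ler_norm_sum _ _ _)); apply: key.
pose Lv : L10 := L10Pack LP.
apply: (@cvgP _ _ Lv).
apply/(cvg_ballP (F := F) id) => e e0.
have e2 : 0 < e / 2 by rewrite divr_gt0.
have [z Fz] := Fc _ e2.
have dz : `|Lv - z| <= e / 2.
  rewrite normL10; apply: l1_le => s us.
  under eq_bigr do rewrite L10B distrC.
  exact: key.
apply: filterS Fz => u; rewrite -!ball_normE /ball_ /= => hu.
rewrite -(subrKA z) (le_lt_trans (ler_normD _ _)) // [e]splitr.
exact: ler_ltD.
Qed.

HB.instance Definition _ := Uniform_isComplete.Build L10 l1_complete.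

Check (L10 : completeNormedModType RR).
End L10.


Set Implicit Arguments.
Unset Strict Implicit.

Section Shift.
Variable Gam : groupType.
Local Notation L := (L10 Gam).

Definition shiftf (g : Gam) (u : Gam -> RR^o) : Gam -> RR^o := fun z => u (g^-1 * z)%g.

Lemma sum_shift (g : Gam) (F : Gam -> RR) (t : seq Gam) :
  \sum_(z <- t) F (g^-1 * z)%g = \sum_(y <- map (fun z => g^-1 * z)%g t) F y.
Proof. by rewrite big_map. Qed.

Lemma uniq_shift (g : Gam) (t : seq Gam) : uniq (map (fun z => g^-1 * z)%g t) = uniq t.
Proof. by apply: map_inj_uniq; exact: mulgI. Qed.

Lemma shift_L1 g (u : L) : shiftf g u \in @L1pred Gam.
Proof.
have [[M hM] su] := L10P u.
rewrite L1P; apply/asboolP; split.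
  exists M => s us; rewrite /shiftf (sum_shift g (fun y => `|u y|)).
  by apply: hM; rewrite uniq_shift.
move=> e e0; have [s0 hs0] := su e e0.
exists (map (fun y => g * y)%g s0) => t ut st.
rewrite /shiftf (sum_shift g (fun y => u y)); apply: hs0; first by rewrite uniq_shift.
move=> y ys; apply/mapP; exists (g * y)%g; last by rewrite mulKg.
by apply: st; apply: map_f.
Qed.

Definition actL (g : Gam) (u : L) : L := L10Pack (shift_L1 g u).

Lemma actLE g (u : L) z : actL g u z = u (g^-1 * z)%g. Proof. by []. Qed.

Lemma actL_norm_le g (u : L) : `|actL g u| <= `|u|.
Proof.
rewrite !normL10; apply: l1_le => s us.
rewrite (sum_shift g (fun y => `|u y|)); apply: l1_ge; by rewrite uniq_shift.
Qed.

Lemma actL_normed : normed_action actL.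
Proof.
split.
- by move=> v; apply: L10_eq => z; rewrite actLE invg1 mul1g.
- by move=> g h v; apply: L10_eq => z; rewrite !actLE invgM mulgA.
- by move=> g r u v; apply: L10_eq => z.
move=> g v; apply/le_anti/andP; split; first exact: actL_norm_le.
have e : actL g^-1 (actL g v) = v.
  by apply: L10_eq => z; rewrite !actLE invgK mulKg.
rewrite -{1}e; exact: actL_norm_le.
Qed.

Definition dlt (y : Gam) : Gam -> RR^o := fun z => if z == y then 1 else 0.

Lemma sum_dlt (t : seq Gam) y : uniq t -> \sum_(z <- t) dlt y z = (y \in t)%:R.
Proof.
elim: t => [|z t IH]; first by rewrite big_nil.
rewrite cons_uniq => /andP[zt ut]; rewrite big_cons IH // in_cons /dlt.
have [zy|zy] := eqVneq z y.
  by rewrite -zy (negbTE zt) addr0 /=.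
by rewrite add0r.
Qed.

Lemma dlt_ge0 y z : 0 <= (dlt y z : RR).
Proof. by rewrite /dlt; case: ifP. Qed.

Definition ddf (y x : Gam) : Gam -> RR^o := fun z => (dlt y z : RR) - dlt x z.

Lemma dd_L1 y x : ddf y x \in @L1pred Gam.
Proof.
rewrite L1P; apply/asboolP; split.
  exists 2 => s us.
  apply: (le_trans (y := \sum_(z <- s) ((dlt y z : RR) + dlt x z))).
    apply: ler_sum => z _; apply: (le_trans (ler_normB _ _)).
    by rewrite !ger0_norm ?dlt_ge0.
  rewrite big_split /= !sum_dlt //.
  rewrite -[2]/(1 + 1); apply: lerD; by case: (_ \in s); rewrite ?ler01 ?lexx.
move=> e e0; exists [:: y; x] => t ut st.
rewrite /ddf sumrB !sum_dlt // !st ?inE ?eqxx ?orbT //.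
by rewrite subrr normr0 ltW.
Qed.

Definition DD y x : L := L10Pack (dd_L1 y x).

Lemma DDE y x z : DD y x z = (dlt y z : RR) - dlt x z. Proof. by []. Qed.

Lemma DD_norm y x : `|DD y x| <= 2.
Proof.
rewrite normL10; apply: l1_le => s us.
apply: (le_trans (y := \sum_(z <- s) ((dlt y z : RR) + dlt x z))).
  apply: ler_sum => z _; rewrite DDE; apply: (le_trans (ler_normB _ _)).
  by rewrite !ger0_norm ?dlt_ge0.
rewrite big_split /= !sum_dlt //.
rewrite -[2]/(1 + 1); apply: lerD; by case: (_ \in s); rewrite ?ler01 ?lexx.
Qed.

Lemma dlt_shift g y z : dlt y (g^-1 * z)%g = dlt (g * y)%g z.
Proof.
rewrite /dlt; congr (if _ then _ else _).
apply/eqP/eqP => [<-|->]; [by rewrite mulVKg | by rewrite mulKg].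
Qed.

Lemma actL_DD g y x : actL g (DD y x) = DD (g * y)%g (g * x)%g.
Proof. by apply: L10_eq => z; rewrite actLE !DDE !dlt_shift. Qed.

Lemma sum_lb (U : eqType) (s : seq U) (F : U -> RR) c :
  (forall h, h \in s -> c <= F h) -> (size s)%:R * c <= \sum_(h <- s) F h.
Proof.
elim: s => [|h s IH] hc; first by rewrite big_nil mul0r.
rewrite big_cons /= -addn1 natrD mulrDl mul1r addrC.
apply: lerD; first by apply: hc; rewrite inE eqxx.
by apply: IH => h' hs; apply: hc; rewrite inE hs orbT.
Qed.

Lemma l1_unbounded (U : choiceType) (A : set U) (f : U -> Gam) (v : Gam -> RR^o) c :
  l1b v -> infinite_set A -> injective f -> 0 < c ->
  (forall h, A h -> c <= `|v (f h)|) -> False.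
Proof.
move=> [M hM] Ainf finj c0 hc.
have M0 : 0 <= M by have := hM [::] isT; rewrite big_nil.
have := archi_boundP (divr_ge0 M0 (ltW c0)).
set N := Num.bound _ => hN.
have [B BA NB] := infinite_set_fset N Ainf.
have := hM (map f (finmap.enum_fset B)); rewrite map_inj_uniq // finmap.fset_uniq => /(_ isT).
rewrite big_map => hs.
have := sum_lb (s := finmap.enum_fset B) (F := fun h => `|v (f h)|) (c := c).
move/(_ (fun h hB => hc h (BA h hB))) => hlb.
have : N%:R * c <= M.
  apply: le_trans hs; apply: le_trans hlb.
  by rewrite ler_pM2r // ler_nat.
by rewrite -ler_pdivlMr // leNgt hN.
Qed.

End Shift.


Set Implicit Arguments.
Unset Strict Implicit.

Section Counter.
Variables (Gam K : groupType) (phi : Gam -> K).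
Hypothesis phi_morph : {morph phi : x y / (x * y)%g}.
Hypothesis Hinf : infinite_set (kerH phi).

Lemma fixed_zero (v : L10 Gam) : fixedH phi (@actL Gam) v -> v = 0.
Proof.
move=> fv; apply: L10_eq => z; rewrite L100.
have [//|nz] := eqVneq (v z : RR) 0.
exfalso.
have [l1 _] := L10P v.
apply: (l1_unbounded (A := kerH phi) (f := fun h => (h^-1 * z)%g) (c := `|(v z : RR)|) l1 Hinf).
- by move=> h1 h2 /mulIg /invg_inj.
- by rewrite normr_gt0.
move=> h hh; have := congr1 (fun u : L10 Gam => (u z : RR)) (fv h hh).
by rewrite actLE => ->.
Qed.

Lemma face3 (y : 'I_3 -> Gam) (i : 'I_3) k : (k <= 1)%N ->
  face i y (inord k) = y (inord (bump i k)).
Proof.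
move=> k1; rewrite /face; congr y; apply: val_inj => /=.
rewrite !inordK //; rewrite /bump; case: (i <= k)%N; lia.
Qed.

Lemma face2 (x : 'I_2 -> Gam) (i : 'I_2) : face i x = (fun _ => x (inord (bump i 0))).
Proof.
apply: boolp.funext => j; rewrite /face (ord1 j); congr x; apply: val_inj => /=.
rewrite inordK //; rewrite /bump; case: (i <= 0)%N; lia.
Qed.

Theorem counter : ~ inflation_iso phi (@actL Gam) 1.
Proof.
move=> [_ surj].
pose c : cochain Gam (L10 Gam) 1 := fun x => DD (x (inord 1)) (x (inord 0)).
have cZ : Zb (@actL Gam) setT 1 c.
  split; first split.
  - by exists 2 => x; apply: DD_norm.
  - by move=> g x; rewrite /c actL_DD !mulVKg.
  - by [].
  move=> y; apply: L10_eq => z.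
  rewrite /coboundary !big_ord_recr big_ord0 !L10D !L10Z L100 /c !DDE !face3 // /bump /=.
  rewrite !addn0 !add0n.
  rewrite expr0 expr1 mulN1r mul1r (_ : ((-1) ^+ 2 : RR) = 1); last by rewrite sqrrN expr1n.
  rewrite mul1r; lra.
have [f fZ fB] := surj c cZ.
have f0 : forall x, inflation phi f x = 0.
  by move=> x; apply: fixed_zero; case: fZ => [[_ _ fx] _]; exact: fx.
case: fB => b [[bb binv _] e].
pose w := b (fun _ => 1%g).
have bg : forall g, b (fun _ => g) = actL g w.
  move=> g; rewrite /w -(binv g (fun _ => g)); congr (actL g (b _)).
  by apply: boolp.funext => i; rewrite mulVg.
have key : forall g z, (dlt g z : RR) - dlt 1%g z = w (g^-1 * z)%g - w z.
  move=> g z; pose x : 'I_2 -> Gam := fun k => if nat_of_ord k == 0%N then 1%g else g.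
  have := congr1 (fun u : L10 Gam => (u z : RR)) (e x).
  rewrite f0 subr0 /coboundary big_ord_recr big_ord1 /= !face2 /bump /= /x /c.
  rewrite !addn0 !inordK //= expr0 expr1 scale1r scaleN1r bg.
  by move=> h; exact: h.
have inv : forall g z, (w (g^-1 * z)%g : RR) - dlt 1%g (g^-1 * z)%g = w z - dlt 1%g z.
  move=> g z; rewrite dlt_shift mulg1.
  have := key g z; lra.
set kap := (w 1%g : RR) - 1.
have wz : forall z, (w z : RR) = kap + dlt 1%g z.
  move=> z; have := inv z z; rewrite mulVg /kap /dlt eqxx; lra.
have [wl ws] := L10P w.
have [k0|k0] := eqVneq kap 0.
  have [s0 hs0] := ws (1 / 2) (ltac:(by rewrite divr_gt0)).
  have hsub : {subset s0 <= undup (1%g :: s0)} by move=> x xs; rewrite mem_undup inE xs orbT.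
  have := hs0 (undup (1%g :: s0)) (undup_uniq _).
  rewrite (_ : \sum_(x <- undup (1%g :: s0)) w x = 1).
    rewrite normr1 => /(_ hsub); lra.
  under eq_bigr do rewrite wz k0 add0r.
  by rewrite sum_dlt ?undup_uniq // mem_undup inE eqxx.
apply: (l1_unbounded (A := kerH phi `\ 1%g) (f := id) (c := `|kap|) wl).
- move=> fin; apply: Hinf.
  apply: (sub_finite_set (B := (kerH phi `\ 1%g) `|` [set 1%g])).
    move=> h hh; have [->|h1] := eqVneq h 1%g; first by right.
    by left; split => // hE; move: h1; rewrite hE eqxx.
  by rewrite finite_setU; split => //; exact: finite_set1.
- by [].
- by rewrite normr_gt0.
move=> h [_ h1]; rewrite /= wz /dlt ifN ?addr0 //; apply/eqP; exact: h1.
Qed.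

End Counter.


Lemma fin_all (Gam K : groupType) (phi : Gam -> K)
    (phi_morph : {morph phi : x y / (x * y)%g})
    (phi_surj : forall k : K, exists g : Gam, phi g = k)
    (fin : finite_set (kerH phi))
    (V : normedModType RR) (a : Gam -> V -> V) (ha : normed_action a) (n : nat) :
  inflation_iso phi a n /\ inflation_isometric phi a n.
Proof.
pose s := fun k : K => xget 1%g [set g | phi g = k].
have sK : forall k, phi (s k) = k.
  by move=> k; apply: (@xgetPex _ 1%g [set g | phi g = k]); apply: phi_surj.
pose hs : seq Gam := finmap.enum_fset (fset_set (kerH phi)).
have Huniq : uniq hs by apply: finmap.fset_uniq.
have hsP : forall g, g \in hs <-> phi g = 1%g.
  move=> g; have := in_fset_set fin g; rewrite /hs => ->.
  by rewrite in_setE.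
have h1 : (1%g : Gam) \in hs by apply/hsP; apply: phi1.
have Hsz : size hs = (size hs).-1.+1.
  by rewrite prednK //; case: hs h1 {Huniq hsP}.
split.
  exact: (fin_iso phi_morph sK Hsz Huniq hsP ha n).
exact: (fin_isom phi_morph sK Hsz Huniq hsP ha).
Qed.

Theorem theoremB (Gam K : groupType) (phi : Gam -> K)
    (phi_morph : {morph phi : x y / (x * y)%g})
    (phi_surj : forall k : K, exists g : Gam, phi g = k) :
  ((forall (V : normedModType RR) (a : Gam -> V -> V), normed_action a ->
      forall n : nat,
        inflation_iso phi a n /\ inflation_isometric phi a n)
   <-> finite_set (kerH phi)) /\
  ((forall (V : completeNormedModType RR) (a : Gam -> V -> V), normed_action a ->
      inflation_iso phi a 1)
   <-> finite_set (kerH phi)).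
Proof.
split; split.
- move=> h; apply: boolp.contrapT => Hinf.
  have [hi _] := h _ _ (@actL_normed Gam) 1%N.
  exact: (counter Hinf hi).
- by move=> fin V a ha n; apply: fin_all.
- move=> h; apply: boolp.contrapT => Hinf.
  exact: (counter Hinf (h _ _ (@actL_normed Gam))).
- by move=> fin V a ha; have [] := @fin_all Gam K phi phi_morph phi_surj fin V a ha 1.
Qed.
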